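(* Every finite-dimensional complex regular evolution algebra $\mathcal{E}$ admits a non-zero idempotent, i.e. an element $u\neq 0$ with $u^2=u$.
   Context: An evolution algebra over $\mathbb{C}$ is a $\mathbb{C}$-algebra $\mathcal{E}$ admitting a basis $\{e_1,\dots,e_n\}$ (a natural basis) such that $e_ie_j=0$ for all $i\neq j$. $\mathcal{E}$ is regular if $\mathcal{E}=\mathcal{E}^2$, equivalently the structure matrix $(a_{ij})$ defined by $e_i^2=\sum_j a_{ij}e_j$ is invertible. *)

(* Defs.v *)
From HB Require Import structures.
From mathcomp Require Import all_boot all_order all_algebra.
From mathcomp Require Import complex.
From mathcomp Require Import reals.
Set Implicit Arguments. Unset Strict Implicit. Unset Printing Implicit Defensive.
Import Order.TTheory GRing.Theory Num.Theory.
Local Open Scope ring_scope.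

(* An n-dimensional evolution algebra over a field K with natural basis
   e_0, ..., e_(n-1) is determined by its structure matrix A = (a_ij),
   e_i^2 = \sum_j a_ij e_j, e_i e_j = 0 (i <> j).  Elements are
   represented by their coordinate row vectors x = \sum_i x_i e_i; then
   x y = \sum_i x_i y_i e_i^2 = (x o y) *m A, with o the entrywise product. *)
Definition evo_mul (K : fieldType) (n : nat) (A : 'M[K]_n) (x y : 'rV[K]_n)
  : 'rV[K]_n :=
  (\row_j (x 0 j * y 0 j)) *m A.

(* Regular: E = E^2, equivalently the structure matrix is invertible. *)
Definition evo_regular (K : fieldType) (n : nat) (A : 'M[K]_n) : bool :=
  A \in unitmx.

(* Main.v *)
Require Import Defs.
From HB Require Import structures.
From mathcomp Require Import all_boot all_order all_algebra.
From mathcomp Require Import complex.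
From mathcomp Require Import reals.
Set Implicit Arguments. Unset Strict Implicit. Unset Printing Implicit Defensive.
Import GRing.Theory.
Local Open Scope ring_scope.

Section Model.
Variables (K : fieldType) (m : nat) (B : 'M[K]_m).
Local Notation T := {set 'I_m}.
Local Notation V := {ffun T -> K^o}.
Definition ev (S : T) : V := [ffun U => (U == S)%:R].

Fixpoint mx (d : nat) (j : 'I_m) (S : T) : V :=
  if d is d'.+1 then
    (if j \in S then \sum_i B i j *: mx d' i (S :\ j) else ev (j |: S))
  else ev (j |: S).

Definition mulx j (S : T) := mx #|S| j S.
Definition Xop j (v : V) : V := \sum_(S : T) v S *: mulx j S.

Lemma mx_fuel d d' j (S : T) : (#|S| <= d)%N -> (#|S| <= d')%N -> mx d j S = mx d' j S.
Proof.
elim: d d' j S => [|d IH] [|d'] j S //= h1 h2.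
- have S0 : S = set0 by apply/eqP; rewrite -cards_eq0 -leqn0.
  by rewrite S0 in_set0.
- have S0 : S = set0 by apply/eqP; rewrite -cards_eq0 -leqn0.
  by rewrite S0 in_set0.
case: ifP => // jS; apply: eq_bigr => i _; congr (_ *: _); apply: IH.
  by move: h1; rewrite (cardsD1 j S) jS.
by move: h2; rewrite (cardsD1 j S) jS.
Qed.

Lemma mulx_notin j (S : T) : j \notin S -> mulx j S = ev (j |: S).
Proof. by rewrite /mulx; case: #|S| => //= n /negbTE ->. Qed.

Lemma mulx_in j (S : T) : j \in S -> mulx j S = \sum_i B i j *: mulx i (S :\ j).
Proof.
move=> jS; rewrite /mulx (cardsD1 j S) jS /= jS.
by apply: eq_bigr => i _.
Qed.

Lemma XopE j (S : T) : Xop j (ev S) = mulx j S.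
Proof.
rewrite /Xop (bigD1 S) //= big1 ?addr0; first by rewrite ffunE eqxx scale1r.
by move=> U /negbTE; rewrite ffunE => ->; rewrite scale0r.
Qed.

Lemma XopD j (v w : V) : Xop j (v + w) = Xop j v + Xop j w.
Proof. by rewrite /Xop -big_split; apply: eq_bigr => S _; rewrite ffunE scalerDl. Qed.

Lemma XopZ j a (v : V) : Xop j (a *: v) = a *: Xop j v.
Proof. by rewrite /Xop scaler_sumr; apply: eq_bigr => S _; rewrite ffunE scalerA. Qed.

Lemma Xop_sum j (I : finType) (F : I -> V) : Xop j (\sum_i F i) = \sum_i Xop j (F i).
Proof.
apply: (big_ind2 (fun x y => Xop j x = y)) => //.
  by rewrite /Xop big1 // => S _; rewrite ffunE scale0r.
by move=> x1 x2 y1 y2 <- <-; rewrite XopD.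
Qed.

Lemma Xop_sumZ j (I : finType) (c : I -> K) (F : I -> V) :
  Xop j (\sum_i c i *: F i) = \sum_i c i *: Xop j (F i).
Proof. by rewrite Xop_sum; apply: eq_bigr => i _; rewrite XopZ. Qed.

Lemma comm_case1 j k (S : T) :
  (forall U : T, (#|U| < #|S|)%N -> forall a b, Xop a (mulx b U) = Xop b (mulx a U)) ->
  k \in S -> j \notin S -> Xop j (mulx k S) = Xop k (mulx j S).
Proof.
move=> IH kS jS; have jk : j != k by apply: contraNneq jS => ->.
rewrite mulx_in // Xop_sumZ (mulx_notin jS) XopE mulx_in; last by rewrite !inE kS orbT.
apply: eq_bigr => i _; rewrite IH; last by rewrite (cardsD1 k S) kS.
rewrite mulx_notin ?XopE; last by rewrite !inE (negbTE jS) andbF.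
congr (_ *: mulx _ _); apply/setP => x; rewrite !inE.
by case: (eqVneq x j) => [->|]; rewrite ?jk ?andbT.
Qed.

Lemma comm_basis (S : T) j k : Xop j (mulx k S) = Xop k (mulx j S).
Proof.
elim: {S}_.+1 {-2}S (ltnSn #|S|) j k => // n IHn S hS j k.
have IH : forall U : T, (#|U| < #|S|)%N -> forall a b, Xop a (mulx b U) = Xop b (mulx a U).
  by move=> U hU a b; apply: IHn; apply: leq_trans hU _; rewrite -ltnS.
case: (eqVneq j k) => [-> //|jk].
case: (boolP (k \in S)) => kS; case: (boolP (j \in S)) => jS.
- have E1 : forall i, Xop j (mulx i (S :\ k)) = \sum_l B l j *: Xop i (mulx l (S :\ k :\ j)).
    move=> i; rewrite IH ?(cardsD1 k S) ?kS // (mulx_in (j:=j)) ?Xop_sumZ //.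
    by rewrite !inE jS andbT.
  have E2 : forall i, Xop k (mulx i (S :\ j)) = \sum_l B l k *: Xop i (mulx l (S :\ j :\ k)).
    move=> i; rewrite IH ?(cardsD1 j S) ?jS // (mulx_in (j:=k)) ?Xop_sumZ //.
    by rewrite !inE kS andbT eq_sym.
  have sm : (#|S :\ k :\ j| < #|S|)%N.
    apply: leq_ltn_trans (subset_leq_card (subsetDl _ _)) _.
    by rewrite (cardsD1 k S) kS.
  rewrite (mulx_in kS) (mulx_in jS) !Xop_sumZ.
  rewrite (eq_bigr (fun i => \sum_l B i k *: (B l j *: Xop i (mulx l (S :\ k :\ j)))));
    last by move=> i _; rewrite E1 scaler_sumr.
  rewrite [RHS](eq_bigr (fun i => \sum_l B i j *: (B l k *: Xop i (mulx l (S :\ j :\ k)))));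
    last by move=> i _; rewrite E2 scaler_sumr.
  rewrite exchange_big /=; apply: eq_bigr => l _.
  apply: eq_bigr => i _; rewrite scalerA [RHS]scalerA (mulrC (B l j)); congr (_ *: _).
  by rewrite IH // !setDDl setUC.
- by apply: comm_case1.
- by apply/esym/comm_case1.
- rewrite (mulx_notin kS) (mulx_notin jS) !XopE.
  rewrite (mulx_notin (j:=j) (S:=k |: S)); last by rewrite !inE negb_or jk.
  rewrite (mulx_notin (j:=k) (S:=j |: S)); last by rewrite !inE negb_or eq_sym jk.
  by rewrite setUCA.
Qed.

Lemma XopS j (v : V) : Xop j v = \sum_(S : T) v S *: Xop j (ev S).
Proof. by apply: eq_bigr => S _; rewrite XopE. Qed.

Lemma Xop_comm j k (v : V) : Xop j (Xop k v) = Xop k (Xop j v).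
Proof.
rewrite [Xop k v]/Xop [Xop j v]/Xop !Xop_sumZ; apply: eq_bigr => S _.
by rewrite comm_basis.
Qed.

Lemma Xop_sq_basis j (S : T) : Xop j (mulx j S) = \sum_i B i j *: mulx i S.
Proof.
case: (boolP (j \in S)) => jS.
  rewrite mulx_in // Xop_sumZ; apply: eq_bigr => i _; congr (_ *: _).
  rewrite comm_basis mulx_notin ?XopE ?setD1K //.
  by rewrite !inE eqxx.
rewrite mulx_notin // XopE mulx_in ?setU11 //; apply: eq_bigr => i _.
congr (_ *: mulx _ _); apply/setP => x; rewrite !inE.
by case: (eqVneq x j) => [->|]; rewrite ?(negbTE jS).
Qed.

Lemma Xop_sq j (v : V) : Xop j (Xop j v) = \sum_i B i j *: Xop i v.
Proof.
rewrite {2}/Xop Xop_sumZ.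
under eq_bigr => S _ do rewrite Xop_sq_basis.
under [RHS]eq_bigr => i _ do rewrite /Xop scaler_sumr.
rewrite exchange_big /=; apply: eq_bigr => S _; rewrite scaler_sumr.
by apply: eq_bigr => i _; rewrite !scalerA mulrC.
Qed.

Lemma mulx0 j (S : T) : mulx j S set0 = 0.
Proof.
elim: {S}_.+1 {-2}S (ltnSn #|S|) j => // n IHn S hS j.
case: (boolP (j \in S)) => jS.
  rewrite mulx_in // sum_ffunE big1 // => i _; rewrite ffunE IHn ?scaler0 //.
  by move: hS; rewrite (cardsD1 j S) jS add1n ltnS.
rewrite mulx_notin // ffunE; case: eqP => // /setP /(_ j).
by rewrite !inE eqxx.
Qed.

Lemma Xop0 j (v : V) : Xop j v set0 = 0.
Proof. by rewrite /Xop sum_ffunE big1 // => S _; rewrite ffunE mulx0 scaler0. Qed.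

End Model.
Section Main.
Variables (K : numClosedFieldType) (m : nat) (A : 'M[K]_m).
Hypothesis hA : A \in unitmx.
Local Notation B := (invmx A).
Local Notation T := {set 'I_m}.
Local Notation V := {ffun T -> K^o}.
Definition Ne : {pred T} := [pred S : T | S != set0].
Local Notation N := #|Ne|.
Local Notation ev := (@ev K m).
Local Notation mulx := (mulx B).
Local Notation Xop := (Xop B).

Definition Aj j : 'M[K]_N := \matrix_(s, t) (mulx j (enum_val t) (enum_val s) : K).

Lemma sum_Ne (F : T -> K) : F set0 = 0 -> \sum_(U : T) F U = \sum_(t < N) F (enum_val t).
Proof.
move=> F0; rewrite (bigD1 set0) //= F0 add0r -big_enum_val /=.
by apply: eq_bigl => U; rewrite inE.
Qed.

Lemma XopE_at j (w : V) (S : T) : Xop j w S = \sum_(U : T) w U * mulx j U S.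
Proof. by rewrite /Xop sum_ffunE; apply: eq_bigr => U _; rewrite ffunE. Qed.

Lemma Aj_comm j k : Aj j *m Aj k = Aj k *m Aj j.
Proof.
apply/matrixP => s t; rewrite !mxE.
have E : forall a b, \sum_(u < N) Aj a s u * Aj b u t = Xop a (mulx b (enum_val t)) (enum_val s).
  move=> a b; rewrite XopE_at sum_Ne; last by rewrite mulx0 mul0r.
  by apply: eq_bigr => u _; rewrite !mxE mulrC.
by rewrite !E comm_basis.
Qed.


Lemma unit_decomp j (S : T) : j \in S ->
  ev S = \sum_i A i j *: Xop i (mulx i (S :\ j)).
Proof.
move=> jS.
have E : forall i, Xop i (mulx i (S :\ j)) = \sum_k B k i *: mulx k (S :\ j).
  by move=> i; rewrite Xop_sq_basis.
under eq_bigr => i _ do rewrite E scaler_sumr.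
rewrite exchange_big /=.
have E2 : forall k, \sum_i A i j *: (B k i *: mulx k (S :\ j)) = (k == j)%:R *: mulx k (S :\ j).
  move=> k; under eq_bigr => i _ do rewrite scalerA.
  rewrite -scaler_suml; congr (_ *: _).
  have := congr1 (fun M : 'M[K]_m => M k j) (mulVmx hA); rewrite !mxE => <-.
  by apply: eq_bigr => i _; rewrite mulrC.
under eq_bigr => k _ do rewrite E2.
rewrite (bigD1 j) //= big1 ?addr0 ?eqxx ?scale1r.
  by rewrite mulx_notin ?setD1K // !inE eqxx.
by move=> k /negbTE ->; rewrite scale0r.
Qed.

Definition phi (p : 'rV[K]_N) (w : V) : K := \sum_(s < N) p 0 s * w (enum_val s).

Lemma phi_lin p (I : finType) (c : I -> K) (F : I -> V) :
  phi p (\sum_i c i *: F i) = \sum_i c i * phi p (F i).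
Proof.
rewrite /phi; under eq_bigr => s _ do rewrite sum_ffunE mulr_sumr.
rewrite exchange_big /=; apply: eq_bigr => i _; rewrite mulr_sumr.
by apply: eq_bigr => s _; rewrite ffunE mulrCA.
Qed.

Lemma phi_ev p t : phi p (ev (enum_val t)) = p 0 t.
Proof.
rewrite /phi (bigD1 t) //= big1 ?addr0; first by rewrite ffunE eqxx mulr1.
move=> s st; rewrite ffunE; case: eqP => [/enum_val_inj E|]; last by rewrite mulr0.
by rewrite E eqxx in st.
Qed.

Lemma ev0 (t : 'I_N) : ev (enum_val t) set0 = 0.
Proof.
rewrite ffunE; case: eqP => // E; have := enum_valP t.
by rewrite -E unfold_in /= eqxx.
Qed.

Lemma exists_sol : (0 < m)%N -> exists lam : 'I_m -> K,
  (exists j, lam j != 0) /\ forall j, lam j * lam j = \sum_i lam i * B i j.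
Proof.
move=> hm.
have N0 : (0 < N)%N.
  apply/card_gt0P; exists [set Ordinal hm]; rewrite inE.
  by apply/negP => /eqP/setP/(_ (Ordinal hm)); rewrite !inE eqxx.
have [p p0 /allP st] := @common_eigenvector K N [seq Aj j | j <- enum 'I_m] N0
  ltac:(by move=> _ _ /mapP[a _ ->] /mapP[b _ ->]; exact: Aj_comm).
have : forall j, exists l, p *m Aj j = l *: p.
  move=> j; apply/sub_rVP; apply: st; apply/mapP; exists j => //; by rewrite mem_enum.
case/fin_all_exists => lam hl.
have F3 : forall j t, phi p (mulx j (enum_val t)) = lam j * p 0 t.
  move=> j t; have := congr1 (fun M : 'rV[K]_N => M 0 t) (hl j); rewrite !mxE => <-.
  by apply: eq_bigr => s _; rewrite !mxE.
have F4 : forall j (w : V), w set0 = 0 -> phi p (Xop j w) = lam j * phi p w.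
  move=> j w w0; rewrite /Xop phi_lin sum_Ne; last by rewrite w0 mul0r.
  rewrite /phi mulr_sumr; apply: eq_bigr => s _.
  by rewrite -/(phi p _) F3 mulrCA [w _ * _]mulrC.
exists lam; split.
  apply/existsP; move: p0; apply: contraNT => /existsPn H.
  apply/eqP/rowP => t; rewrite mxE -phi_ev.
  have := enum_valP t; rewrite unfold_in /= => /set0Pn [j jS].
  rewrite (unit_decomp jS) phi_lin big1 // => i _.
  by rewrite F4 ?mulx0 // (eqP (negbNE (H i))) mul0r mulr0.
have [t pt] : exists t, p 0 t != 0.
  apply/existsP; move: p0; apply: contraNT => /existsPn H.
  by apply/eqP/rowP => t; rewrite mxE; apply/eqP/negPn/H.
move=> j; apply: (mulIf pt).
have E1 : phi p (Xop j (Xop j (ev (enum_val t)))) = lam j * lam j * p 0 t.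
  by rewrite F4 ?Xop0 // F4 ?ev0 // phi_ev mulrA.
rewrite -E1 Xop_sq phi_lin mulr_suml; apply: eq_bigr => i _.
by rewrite F4 ?ev0 // phi_ev mulrA [B i j * _]mulrC.
Qed.

End Main.

Unset Implicit Arguments.
Set Strict Implicit.
Local Open Scope ring_scope.

(* R : realType is (up to isomorphism) the real numbers, so R[i] is C. *)
Theorem theorem3p5 (R : realType) (n : nat) (A : 'M[R[i]]_n.+1) :
  evo_regular A ->
  exists u : 'rV[R[i]]_n.+1, u != 0 /\ evo_mul A u u = u.
Proof.
move=> hA; have [lam [[j lj] hl]] := exists_sol hA (ltn0Sn n).
exists (\row_k lam k); split.
  apply/negP => /eqP/rowP/(_ j); rewrite !mxE => lj0.
  by rewrite lj0 eqxx in lj.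
rewrite /evo_mul.
have -> : \row_k ((\row_k lam k) 0 k * (\row_k lam k) 0 k) = (\row_k lam k) *m invmx A.
  apply/rowP => k; rewrite !mxE hl; apply: eq_bigr => i _; rewrite mxE.
  by [].
by rewrite -mulmxA mulVmx // mulmx1.
Qed.
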